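(* Let $F$ be a $2$-edge-coloured graph on $n \geq 2$ vertices such that $d^R(v) \geq \log_2 n$ and $d^B(v) \geq \log_2 n$ for every vertex $v \in V(F)$. Then $F$ contains an alternating cycle.
   Context: A $2$-edge-coloured graph is a finite simple graph each of whose edges is coloured red or blue. For a vertex $v$, $d^R(v)$ (resp. $d^B(v)$) is the number of red (resp. blue) edges incident to $v$. An alternating cycle is a cycle (in the graph-theoretic sense, with distinct vertices) whose consecutive edges have alternating colours. *)

(* Defs.v *)
From mathcomp Require Import all_boot.
Set Implicit Arguments. Unset Strict Implicit. Unset Printing Implicit Defensive.

Definition two_edge_coloured (T : finType) (red blue : rel T) : Prop :=
  [/\ symmetric red, symmetric blue, irreflexive red, irreflexive blue
    & forall x y, ~~ (red x y && blue x y)].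

Definition degR (T : finType) (red : rel T) (v : T) : nat := #|[set u | red v u]|.
Definition degB (T : finType) (blue : rel T) (v : T) : nat := #|[set u | blue v u]|.

(* An alternating cycle: a duplicate-free sequence c = [c_0; ...; c_{m-1}]
   of m >= 3 vertices such that the edges c_i c_{i+1 mod m} exist, and
   consecutive edges (cyclically) have different colours; concretely edge i
   is red for even i and blue for odd i (up to rotation/colour swap this is
   the general case; alternation around the closing vertex forces m even). *)
Definition alternating_cycle (T : finType) (red blue : rel T) (c : seq T) : bool :=
  if c is x0 :: _ then
    let m := size c in
    [&& uniq c, 3 <= m, ~~ odd m &
        all (fun i => let x := nth x0 c i in
                      let y := nth x0 c (i.+1 %% m) in
                      if odd i then blue x y else red x y) (iota 0 m)]
  else false.

(* Main.v *)
Require Import Defs.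
From mathcomp Require Import all_boot.
Set Implicit Arguments. Unset Strict Implicit. Unset Printing Implicit Defensive.

Definition arc (T : finType) (red blue : rel T) (A : {set T}) (v w : T) : bool :=
  if v \in A then red v w && (w \notin A) else blue v w && (w \in A).
Definition sink (T : finType) (red blue : rel T) (A : {set T}) (v : T) : bool :=
  [forall w, ~~ arc red blue A v w].

Lemma sink_card (T : finType) (red blue : rel T) (v : T) :
  two_edge_coloured red blue ->
  #|T| <= 2 ^ degR red v -> #|T| <= 2 ^ degB blue v ->
  #|T| * #|[set A | sink red blue A v]| <= 2 ^ #|T|.
Proof.
case=> sR sB iR iB dj hR hB.
set NR := [set u | red v u]; set NB := [set u | blue v u].
set SR := v |: NR; set SB := v |: NB.
have cSR : #|SR| = (degR red v).+1 by rewrite cardsU1 inE iR.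
have cSB : #|SB| = (degB blue v).+1 by rewrite cardsU1 inE iB.
have sub : [set A | sink red blue A v] \subset
   (@setC T @: powerset (~: SR)) :|: powerset (~: SB).
  apply/subsetP=> A; rewrite inE => /forallP hs; rewrite inE.
  case vA: (v \in A).
  - apply/orP; left; rewrite -[A]setCK; apply: imset_f.
    rewrite powersetE subsetC setCK; apply/subsetP=> u.
    rewrite !inE => /orP[/eqP -> //|ru].
    by have := hs u; rewrite /arc vA ru /= negbK.
  - apply/orP; right; rewrite powersetE subsetC; apply/subsetP=> u.
    rewrite !inE => /orP[/eqP -> //|bu]; first by rewrite vA.
    by have := hs u; rewrite /arc vA bu.
have := subset_leq_card sub.
move/(leq_trans)/(_ (leq_trans (leq_card_setU _ _) (leq_add (leq_imset_card _ _) (leqnn _)))).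
rewrite !card_powerset => h.
have eR : #|~: SR| + (degR red v).+1 = #|T| by rewrite -cSR addnC cardsC.
have eB : #|~: SB| + (degB blue v).+1 = #|T| by rewrite -cSB addnC cardsC.
apply: leq_trans (leq_mul (leqnn _) h) _.
rewrite mulnDr.
have -> : 2 ^ #|T| = 2 ^ #|T|.-1 + 2 ^ #|T|.-1.
  have : 0 < #|T| by rewrite -eR addnS.
  by case: #|T| => // k _; rewrite expnS mul2n -addnn.
apply: leq_add.
- have -> : #|T|.-1 = degR red v + #|~: SR| by rewrite -eR addnS addnC.
  by rewrite expnD leq_mul2r hR orbT.
- have -> : #|T|.-1 = degB blue v + #|~: SB| by rewrite -eB addnS addnC.
  by rewrite expnD leq_mul2r hB orbT.
Qed.

Lemma card_sumb (I : finType) (P : pred I) : #|[set i | P i]| = \sum_i (P i : nat).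
Proof.
rewrite -sum1_card big_mkcond /=; apply: eq_bigr => i _; rewrite inE; by case: (P i).
Qed.

Lemma sum_sinks (T : finType) (red blue : rel T) :
  two_edge_coloured red blue ->
  (forall v : T, #|T| <= 2 ^ degR red v /\ #|T| <= 2 ^ degB blue v) ->
  0 < #|T| ->
  \sum_(A : {set T}) #|[set v | sink red blue A v]| <= 2 ^ #|T|.
Proof.
move=> hc hd n0.
rewrite (eq_bigr (fun A => \sum_v (sink red blue A v : nat))); last by move=> A _; rewrite card_sumb.
rewrite exchange_big /=.
rewrite -(leq_pmul2l n0) big_distrr /=.
apply: leq_trans (_ : \sum_(v : T) 2 ^ #|T| <= _).
  apply: leq_sum => v _; rewrite -card_sumb.
  by have [h1 h2] := hd v; exact: sink_card.
by rewrite sum_nat_const.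
Qed.

Lemma period_exists (T : finType) (f : T -> T) (x0 : T) :
  exists z, exists p, [/\ 0 < p, iter p f z = z &
     forall q, 0 < q < p -> iter q f z != z].
Proof.
set z := iter #|T| f x0.
have : looping f x0 #|T|.
  rewrite -[looping _ _ _]negbK -looping_uniq; apply/negP=> /card_uniqP.
  rewrite size_traject => h; have := max_card (mem (traject f x0 #|T|.+1)).
  by rewrite h ltnn.
move=> /trajectP[i ilt ei].
have ex : exists p, (0 < p) && (iter p f z == z).
  exists (#|T| - i); rewrite subn_gt0 ilt /=; apply/eqP.
  by rewrite /z {1}ei -iterD subnK // ltnW.
exists z, (ex_minn ex).
case: ex_minnP => p /andP[p0 /eqP ep] pmin; split=> // q /andP[q0 qp].
apply/negP=> /eqP eq; have := pmin q; rewrite q0 eq eqxx => /(_ isT).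
by rewrite leqNgt qp.
Qed.

Lemma uniq_period (T : finType) (f : T -> T) (w : T) (p : nat) :
  0 < p -> iter p f w = w -> (forall q, 0 < q < p -> iter q f w != w) ->
  uniq (traject f w p).
Proof.
case: p => // p _ ep hmin; rewrite looping_uniq; apply/negP => /trajectP[i ilt ei].
have := hmin i.+1; rewrite /= ltnS ilt => /(_ isT); apply/negP; rewrite negbK.
by rewrite -ei -iterS ep.
Qed.

Lemma cycle_of_nosink (T : finType) (red blue : rel T) (A : {set T}) (x0 : T) :
  two_edge_coloured red blue -> (forall v, ~~ sink red blue A v) ->
  exists c : seq T, alternating_cycle red blue c.
Proof.
case=> sR sB iR iB dj hns.
pose f v := odflt v [pick w | arc red blue A v w].
have harc : forall v, arc red blue A v (f v).
  move=> v; rewrite /f; case: pickP => //= h.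
  by have := hns v; rewrite /sink negb_forall => /existsP[w]; rewrite h.
have halt : forall v, (f v \in A) = ~~ (v \in A).
  move=> v; have := harc v; rewrite /arc; case: (v \in A) => /andP[_ h] /=.
  - exact: negbTE.
  - exact: h.
have [z [p [p0 ep pmin]]] := period_exists f x0.
pose z' := if z \in A then z else f z.
have z'A : z' \in A by rewrite /z'; case: ifP => // /negbT; rewrite halt.
have ep' : iter p f z' = z'.
  by rewrite /z'; case: ifP => // _; rewrite -iterSr iterS ep.
have pmin' : forall q, 0 < q < p -> iter q f z' != z'.
  rewrite /z'; case: ifP => // _ q hq; apply/negP => /eqP e.
  have := pmin q hq; apply/negP; rewrite negbK.
  have : iter p.-1 f (iter q f (f z)) = iter p.-1 f (f z) by rewrite e.
  by rewrite -!iterSr -iterD prednK // ep addnC iterD ep => ->.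
have par : forall i, (iter i f z' \in A) = ~~ odd i.
  by elim=> [|i IH] //; rewrite iterS halt IH /= negbK.
have pev : ~~ odd p by rewrite -par ep'.
have p3 : 3 <= p.
  case: p p0 pev ep' {ep pmin pmin'} => [|[|[|p]]] //= _ _ e2.
  have h1 := harc z'; have h2 := harc (f z').
  rewrite /arc z'A /= in h1; rewrite /arc halt z'A /= e2 in h2.
  case/andP: h1 => r _; case/andP: h2 => b _.
  by have := dj z' (f z'); rewrite r /= sB b.
have ec : traject f z' p = z' :: traject f (f z') p.-1 by rewrite -trajectS prednK.
exists (traject f z' p).
rewrite /alternating_cycle ec -ec.
rewrite uniq_period // size_traject p3 pev /=.
apply/allP => i; rewrite mem_iota add0n => /andP[_ ilt].
rewrite !nth_traject ?ltn_pmod //.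
have -> : iter (i.+1 %% p) f z' = f (iter i f z').
  case: (ltngtP i.+1 p) => h; first by rewrite modn_small.
  - by move: h; rewrite ltnS leqNgt ilt.
  - by rewrite h modnn /= -iterS h ep'.
have := harc (iter i f z'); rewrite /arc par.
by case: (odd i) => /= /andP[].
Qed.

Theorem corollary2p2 (T : finType) (red blue : rel T) :
  two_edge_coloured red blue ->
  2 <= #|T| ->
  (forall v : T, #|T| <= 2 ^ degR red v /\ #|T| <= 2 ^ degB blue v) ->
  exists c : seq T, alternating_cycle red blue c.
Proof.
move=> hc n2 hd.
have n0 : 0 < #|T| by apply: leq_trans n2.
have [x0 _] : exists x0 : T, true.
  by case/card_gt0P: n0 => x _; exists x.
case: (boolP [exists A : {set T}, [forall v, ~~ sink red blue A v]]).
  by case/existsP=> A /forallP h; exact: (cycle_of_nosink x0 hc h).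
rewrite negb_exists => /forallP hs; exfalso.
have hs1 : forall A : {set T}, 1 <= #|[set v | sink red blue A v]|.
  move=> A; have := hs A; rewrite negb_forall => /existsP[v]; rewrite negbK => sv.
  by rewrite card_gt0; apply/set0Pn; exists v; rewrite inE.
have hT : #|[set v | sink red blue setT v]| = #|T|.
  rewrite (_ : [set v | sink red blue setT v] = setT) ?cardsT //; apply/setP=> v; rewrite !inE.
  by apply/forallP=> w; rewrite /arc !inE /= andbF.
have := sum_sinks hc hd n0.
rewrite (bigD1 setT) //= hT.
have : #|predC1 (setT : {set T})| <= \sum_(A | A != setT) #|[set v | sink red blue A v]|.
  rewrite -sum1_card; apply: leq_sum => A _; exact: hs1.
rewrite cardC1.
have : 2 ^ #|T| <= #|{set T}|.
  by rewrite -cardsT -card_powerset; apply: max_card.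
move=> h1 h2 h3.
have h4 := leq_trans (leq_add n2 h2) h3.
have h5 : 0 < 2 ^ #|T| by rewrite expn_gt0.
move: h1 h4 h5; case: #|{set T}| => [|k] /=; first by move=> a _; rewrite leqNgt => /negP.
move=> a b _; have := leq_trans b a.
by rewrite add2n ltnn.
Qed.
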